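(* Let $\mu_1,\mu_2$, $P_{n,m}$, the shifted step-line polynomials $p_n^{(0,k)}$, their recurrence coefficients $\beta_n^{(0,k)},\gamma_n^{(0,k)},\delta_n^{(0,k)}$ and the numbers $c_n^{(0,k)}$ be as in the context. Then for all $k\ge 0$: \begin{align*} \beta_{2n+k}^{(0,k+1)} &= \beta_{2n+k}^{(0,k)} + c_n^{(0,k)}, && n\ge 0,\\ \gamma_{2n+k}^{(0,k+1)} &= \gamma_{2n+k}^{(0,k)}, && n\ge 1,\\ \delta_{2n+k}^{(0,k+1)} &= \delta_{2n+k}^{(0,k)} + c_{n-1}^{(0,k)}\gamma_{2n+k}^{(0,k)}, && n\ge 1, \end{align*} and \begin{align*} \beta_{2n+k+1}^{(0,k+1)} &= \beta_{2n+k+1}^{(0,k)} - c_n^{(0,k)}, && n\ge 0,\\ \gamma_{2n+k+1}^{(0,k+1)} &= \gamma_{2n+k+1}^{(0,k)} - c_n^{(0,k)}\bigl(\beta_{2n+k}^{(0,k)}-\beta_{2n+k+1}^{(0,k+1)}\bigr), && n\ge 0,\\ \delta_{2n+k+1}^{(0,k+1)} &= \delta_{2n+k+1}^{(0,k)} - c_n^{(0,k)}\gamma_{2n+k}^{(0,k)}, && n\ge 1, \end{align*} where $(c_n^{(0,k)})_{n\ge 0}$ is the solution of the Riccati type difference equation \[ c_n^{(0,k)} = \frac{c_{n-1}^{(0,k)}\,\delta_{2n+k+1}^{(0,k)}}{\delta_{2n+k}^{(0,k)} + c_{n-1}^{(0,k)}\gamma_{2n+k}^{(0,k)}}, \qquad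 n\ge 1, \] with initial condition $c_0^{(0,k)} = \delta_{k+1}^{(0,k)}/\gamma_k^{(0,k)}$ for $k\ge 1$, while for $k=0$ the value $c_0^{(0,0)}$ is a free parameter (not given by such a formula).
   Context: Let $\mu_1,\mu_2$ be positive Borel measures on $\mathbb{R}$ with all moments finite, forming a normal system: for every $(n,m)\in\mathbb{N}^2$ ($\mathbb{N}=\{0,1,2,\dots\}$) there is a unique monic polynomial $P_{n,m}$ of degree $n+m$ with $\int x^k P_{n,m}(x)\,d\mu_1(x)=0$ for $0\le k\le n-1$ and $\int x^k P_{n,m}(x)\,d\mu_2(x)=0$ for $0\le k\le m-1$. Set $P_{n,m}=0$ if $n<0$ or $m<0$. For $k\ge 0$ define the shifted step-line polynomials $p_{2n+k}^{(0,k)}=P_{n,n+k}$ and $p_{2n+k+1}^{(0,k)}=P_{n+1,n+k}$ for $n\ge -1$ (with the convention above, so $p_{k-1}^{(0,k)}=P_{0,k-1}$ and $p_{k-2}^{(0,k)}=0$). For $n\ge k$ they satisfy the four-term recurrence \[ x p_n^{(0,k)}(x) = p_{n+1}^{(0,k)}(x) + \beta_n^{(0,k)} p_n^{(0,k)}(x) + \gamma_n^{(0,k)} p_{n-1}^{(0,k)}(x) + \delta_n^{(0,k)} p_{n-2}^{(0,k)}(x), \] which defines the real numbers $\beta_n^{(0,k)},\gamma_n^{(0,k)},\delta_n^{(0,k)}$ for $n\ge k$ (coefficients multiplying the zero polynomial are set to $0$). In addition, for $k\ge 0$, $\beta_k^{(0,k+1)}$ denotes the constant such that $xP_{0,k}(x)-P_{0,k+1}(x)-\beta_k^{(0,k+1)}P_{0,k}(x)$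 has degree less than $k$. For $k=0$ one gets the step-line polynomials $p_{2n}=P_{n,n}$, $p_{2n+1}=P_{n+1,n}$ with coefficients $\beta_n=\beta_n^{(0,0)}$, $\gamma_n=\gamma_n^{(0,0)}$, $\delta_n=\delta_n^{(0,0)}$. For $k\ge 0$ and $n\ge 0$, $c_n^{(0,k)}$ denotes the constant such that $P_{n+1,n+k}(x)-P_{n,n+k+1}(x)=c_n^{(0,k)}P_{n,n+k}(x)$ (such a constant exists). *)

(* Defs.v *)
From HB Require Import structures.
From mathcomp Require Import all_boot all_order all_algebra.
From mathcomp Require Import all_classical all_reals all_analysis.
Set Implicit Arguments. Unset Strict Implicit. Unset Printing Implicit Defensive.
Import Order.TTheory GRing.Theory Num.Theory.
Local Open Scope ring_scope.

Section Defs.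
Variable R : realType.

Definition finite_moments (mu : {measure set R -> \bar R}) : Prop :=
  forall k : nat, mu.-integrable setT (fun x : R => (x ^+ k)%:E).

Definition is_mop (mu1 mu2 : {measure set R -> \bar R}) (n m : nat)
    (Q : {poly R}) : Prop :=
  [/\ Q \is monic, size Q = (n + m).+1,
      (forall j : nat, (j < n)%N ->
          (\int[mu1]_x ((x ^+ j * Q.[x])%:E) = 0)%E) &
      (forall j : nat, (j < m)%N ->
          (\int[mu2]_x ((x ^+ j * Q.[x])%:E) = 0)%E)].

Definition normal_system_with (mu1 mu2 : {measure set R -> \bar R})
    (P : nat -> nat -> {poly R}) : Prop :=
  forall n m : nat, is_mop mu1 mu2 n m (P n m) /\
    (forall Q, is_mop mu1 mu2 n m Q -> Q = P n m).

(* Shifted step-line polynomials p_j^{(0,k)}, indexed by j : int, with the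
   convention P_{n,m} = 0 for negative indices:
     p_{2n+k}^{(0,k)} = P_{n,n+k},  p_{2n+k+1}^{(0,k)} = P_{n+1,n+k}  (n >= 0),
     p_{k-1}^{(0,k)} = P_{0,k-1} (k >= 1),  and 0 for smaller indices. *)
Definition pstep (P : nat -> nat -> {poly R}) (k : nat) (j : int) : {poly R} :=
  match j with
  | Posz j' =>
      if (k <= j')%N then
        let n := ((j' - k)./2)%N in
        if odd (j' - k) then P n.+1 (n + k)%N else P n (n + k)%N
      else if j'.+1 == k then P 0%N k.-1 else 0
  | Negz _ => 0
  end.

End Defs.

(* Main.v *)
Require Import Defs.
From HB Require Import structures.
From mathcomp Require Import all_boot all_order all_algebra.
From mathcomp Require Import all_classical all_reals all_analysis.
From mathcomp Require Import zify ring lra.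
Import Order.TTheory GRing.Theory Num.Theory.
Local Open Scope ring_scope.

Section Ana.
Variable R : realType.
Variable mu : {measure set R -> \bar R}.
Hypothesis fm : finite_moments mu.

Lemma intpoly (Q : {poly R}) (j : nat) :
  mu.-integrable setT (fun x : R => (x ^+ j * Q.[x])%:E).
Proof.
elim/poly_ind: Q j => [|Q a IH] j.
  apply: (eq_integrable measurableT _ _ _ (integrable0 mu setT)) => // x _ /=.
  by rewrite horner0 mulr0.
apply: (eq_integrable measurableT _ _ _ (integrableD measurableT (IH j.+1) (integrableZl measurableT a (fm j)))) => //.
move=> x _ /=; rewrite hornerMXaddC -EFinM -EFinD; congr EFin.
rewrite exprS; ring.
Qed.

Definition L (j : nat) (Q : {poly R}) : R :=
  fine (\int[mu]_x ((x ^+ j * Q.[x])%:E))%E.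

Lemma LE j Q : (\int[mu]_x ((x ^+ j * Q.[x])%:E))%E = (L j Q)%:E.
Proof. by rewrite /L fineK //; apply: integrable_fin_num => //; exact: intpoly. Qed.

Lemma LD j Q1 Q2 : L j (Q1 + Q2) = L j Q1 + L j Q2.
Proof.
apply: EFin_inj; rewrite EFinD -!LE -integralD //; try exact: intpoly.
by apply: eq_integral => x _; rewrite hornerD mulrDr EFinD.
Qed.

Lemma LZ j a Q : L j (a *: Q) = a * L j Q.
Proof.
apply: EFin_inj; rewrite EFinM -!LE -integralZl //; try exact: intpoly.
by apply: eq_integral => x _; rewrite hornerZ -EFinM; congr EFin; ring.
Qed.

Lemma LX j Q : L j ('X * Q) = L j.+1 Q.
Proof.
by rewrite /L; congr fine; apply: eq_integral => x _; rewrite [('X * Q)]mulrC hornerMX exprS; congr EFin; ring.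
Qed.

Lemma L0 j : L j 0 = 0.
Proof. by rewrite -(scale0r 0) LZ mul0r. Qed.

Lemma LB j Q1 Q2 : L j (Q1 - Q2) = L j Q1 - L j Q2.
Proof. by rewrite LD -scaleN1r LZ; ring. Qed.

End Ana.
Arguments L {R} mu j Q.
Arguments LE {R} mu fm j Q.
Arguments LD {R} mu fm j Q1 Q2.
Arguments LZ {R} mu fm j a Q.
Arguments LB {R} mu fm j Q1 Q2.
Arguments LX {R} mu j Q.
Arguments L0 {R} mu fm j.

Section NS.
Variable R : realType.
Variables mu1 mu2 : {measure set R -> \bar R}.
Hypothesis fm1 : finite_moments mu1.
Hypothesis fm2 : finite_moments mu2.
Variable P : nat -> nat -> {poly R}.
Hypothesis NS : normal_system_with mu1 mu2 P.

Lemma Psize n m : size (P n m) = (n + m).+1.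
Proof. by case: (NS n m) => -[]. Qed.

Lemma Pmonic n m : P n m \is monic.
Proof. by case: (NS n m) => -[]. Qed.

Lemma ortho1 n m j : (j < n)%N -> L mu1 j (P n m) = 0.
Proof. by case: (NS n m) => -[_ _ h _] _ /h; rewrite /L => ->. Qed.

Lemma ortho2 n m j : (j < m)%N -> L mu2 j (P n m) = 0.
Proof. by case: (NS n m) => -[_ _ _ h] _ /h; rewrite /L => ->. Qed.

Lemma Pneq0 n m : P n m != 0.
Proof. by rewrite -size_poly_eq0 Psize. Qed.

Lemma nv1 n m : L mu1 n (P n m) != 0.
Proof.
apply/negP => /eqP H0.
have hs : (size (P n m) < size (P n.+1 m))%N by rewrite !Psize addSn.
have hQ : is_mop mu1 mu2 n.+1 m (P n.+1 m + P n m).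
  split.
  - by rewrite monicE lead_coefDl // -monicE Pmonic.
  - by rewrite size_addl // Psize.
  - move=> j hj; rewrite (LE _ fm1) (LD _ fm1) ortho1 // add0r.
    move: hj; rewrite ltnS leq_eqVlt => /orP[/eqP->|hj]; first by rewrite H0.
    by rewrite ortho1.
  - by move=> j hj; rewrite (LE _ fm2) (LD _ fm2) !ortho2 // addr0.
have := (NS n.+1 m).2 _ hQ => /eqP; rewrite -subr_eq0 addrAC subrr add0r => /eqP.
by move=> h; move: (Pneq0 n m); rewrite h eqxx.
Qed.

Lemma nv2 n m : L mu2 m (P n m) != 0.
Proof.
apply/negP => /eqP H0.
have hs : (size (P n m) < size (P n m.+1))%N by rewrite !Psize addnS.
have hQ : is_mop mu1 mu2 n m.+1 (P n m.+1 + P n m).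
  split.
  - by rewrite monicE lead_coefDl // -monicE Pmonic.
  - by rewrite size_addl // Psize.
  - by move=> j hj; rewrite (LE _ fm1) (LD _ fm1) !ortho1 // addr0.
  - move=> j hj; rewrite (LE _ fm2) (LD _ fm2) ortho2 // add0r.
    move: hj; rewrite ltnS leq_eqVlt => /orP[/eqP->|hj]; first by rewrite H0.
    by rewrite ortho2.
have := (NS n m.+1).2 _ hQ => /eqP; rewrite -subr_eq0 addrAC subrr add0r => /eqP.
by move=> h; move: (Pneq0 n m); rewrite h eqxx.
Qed.

End NS.

Section PS.
Variable R : realType.
Variable P : nat -> nat -> {poly R}.
Hypothesis Ps : forall n m, size (P n m) = (n + m).+1.

Lemma ps_even k n : pstep P k (2 * n + k)%N = P n (n + k).
Proof.
rewrite /pstep leq_addl addnK mul2n odd_double /= doubleK //.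
Qed.

Lemma ps_odd k n : pstep P k (2 * n + k).+1 = P n.+1 (n + k).
Proof.
rewrite /pstep ifT; last by lia.
have -> : ((2 * n + k).+1 - k = (n.*2).+1)%N by rewrite -mul2n; lia.
by rewrite /= odd_double /= uphalf_double.
Qed.

Lemma ps_k1 k n : pstep P k.+1 (2 * n + k)%N = P n (n + k).
Proof.
case: n => [|n].
  by rewrite /pstep muln0 add0n ltnn eqxx.
have -> : (2 * n.+1 + k = (2 * n + k.+1).+1)%N by lia.
by rewrite ps_odd addSn addnS.
Qed.

Lemma ps_size k (z : int) (m : nat) : (z < m%:Z)%R -> (size (pstep P k z) <= m)%N.
Proof.
case: z => [j|j] /= hj; last by rewrite size_poly0.
have hjm : (j < m)%N by move: hj; rewrite ltz_nat.
rewrite /pstep; case: ifP => hk.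
  have := odd_double_half (j - k); case: (odd (j - k)) => /= h.
    rewrite Ps; move: h; rewrite -mul2n; lia.
  rewrite Ps; move: h; rewrite -mul2n; lia.
case: ifP => h; last by rewrite size_poly0.
rewrite Ps; move/eqP: h; lia.
Qed.

End PS.

Lemma zS1 (m : nat) : (m.+1%:Z - 1 = m%:Z)%R.
Proof. lia. Qed.
Lemma zS2 (m : nat) : (m.+2%:Z - 2 = m%:Z)%R.
Proof. lia. Qed.
Lemma zS12 (m : nat) : (m.+1%:Z - 2 = m%:Z - 1)%R.
Proof. lia. Qed.

Lemma extract (R : nzRingType) (A B C : {poly R}) (a : R) :
  A \is monic -> (size B < size A)%N -> (size C < size A)%N ->
  a *: A + B = C -> a = 0.
Proof.
move=> mA hB hC E.
have := congr1 (fun p : {poly R} => p`_(size A).-1) E => /=.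
have sA : (0 < size A)%N by move: hB; case: (size A).
rewrite coefD coefZ (nth_default 0 (s:=B)); last by rewrite -ltnS prednK.
rewrite (nth_default 0 (s:=C)); last by rewrite -ltnS prednK.
by move: mA; rewrite monicE /lead_coef => /eqP ->; rewrite mulr1 addr0.
Qed.

Lemma size_lin2 (R : nzRingType) (X Y : {poly R}) (a b : R) n :
  (size X <= n)%N -> (size Y <= n)%N -> (size (a *: X + b *: Y)%R <= n)%N.
Proof.
move=> hX hY; apply: leq_trans (size_add _ _) _; rewrite geq_max.
by rewrite (leq_trans (size_scale_leq _ _)) // (leq_trans (size_scale_leq _ _)).
Qed.

Lemma eq_sub0 (R : zmodType) (x y G : R) : x = y -> G = y - x -> G = 0.
Proof. by move=> -> ->; rewrite subrr. Qed.
Section Main.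
Variable R : realType.
Variables mu1 mu2 : {measure set R -> \bar R}.
Variable P : nat -> nat -> {poly R}.
Variables beta gamma delta c : nat -> nat -> R.
Hypothesis fm1 : finite_moments mu1.
Hypothesis fm2 : finite_moments mu2.
Hypothesis NS : normal_system_with mu1 mu2 P.
Hypothesis Hrec : forall k n : nat, (k <= n)%N ->
     'X * pstep P k n = pstep P k (n.+1)%:Z + beta k n *: pstep P k n
       + gamma k n *: pstep P k (n%:Z - 1) + delta k n *: pstep P k (n%:Z - 2).
Hypothesis Hb : forall k : nat,
     (size ('X * P 0%N k - P 0%N k.+1 - beta k.+1 k *: P 0%N k)%R <= k)%N.
Hypothesis Hc : forall k n : nat,
     P n.+1 (n + k)%N - P n (n + k).+1 = c k n *: P n (n + k)%N.

Let Ps : forall n m, size (P n m) = (n + m).+1 := @Psize R mu1 mu2 P NS.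

Let O2 := @ortho2 R mu1 mu2 P NS.
Let NV2 := @nv2 R mu1 mu2 fm1 fm2 P NS.
Let Pm := @Pmonic R mu1 mu2 P NS.

Lemma Peq a b a2 b2 : a = a2 -> b = b2 -> P a b = P a2 b2.
Proof. by move=> -> ->. Qed.

Lemma part1 k n' :
  let N := (2 * n' + k).+2 in
  [/\ beta k.+1 N = beta k N + c k n'.+1,
      gamma k.+1 N = gamma k N,
      delta k.+1 N = delta k N + c k n' * gamma k N &
      delta k.+1 N != 0].
Proof.
move=> N.
set A0 := P n'.+2 (n'.+1 + k); set A1 := P n'.+1 (n'.+1 + k).
set A2 := P n'.+1 (n' + k); set A3 := P n' (n' + k).
have E1 : 'X * A1 = A0 + beta k N *: A1 + gamma k N *: A2 + delta k N *: A3.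
  have := Hrec k N ltac:(lia).
  have p0 : pstep P k N = A1 by rewrite /A1 -ps_even; congr pstep; congr Posz; lia.
  have p1 : pstep P k N.+1 = A0 by rewrite /A0 -ps_odd; congr pstep; congr Posz; lia.
  have p2 : pstep P k N.-1 = A2 by rewrite /A2 -ps_odd; congr pstep; congr Posz; lia.
  have p3 : pstep P k N.-2 = A3 by rewrite /A3 /N -ps_even.
  by rewrite zS1 zS2 -p2 -p3 p0 p1.
have E2 : 'X * A1 = P n'.+1 (n'.+1 + k).+1 + beta k.+1 N *: A1
     + gamma k.+1 N *: P n' (n' + k).+1 + delta k.+1 N *: A3.
  have := Hrec k.+1 N ltac:(lia).
  have p0 : pstep P k.+1 N = A1.
    transitivity (P n'.+1 (n' + k.+1)); [rewrite -ps_odd; congr pstep; congr Posz; lia | apply: Peq; lia].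
  have p1 : pstep P k.+1 N.+1 = P n'.+1 (n'.+1 + k).+1.
    transitivity (P n'.+1 (n'.+1 + k.+1)); [rewrite -ps_even; congr pstep; congr Posz; lia | apply: Peq; lia].
  have p2 : pstep P k.+1 N.-1 = P n' (n' + k).+1.
    transitivity (P n' (n' + k.+1)); [rewrite -ps_even; congr pstep; congr Posz; lia | apply: Peq; lia].
  have p3 : pstep P k.+1 N.-2 = A3 by rewrite /A3 /N -ps_k1.
  by rewrite zS1 zS2 -p2 -p3 p0 p1.
have dnz : delta k.+1 N != 0.
  have := congr1 (L mu2 (n' + k)) E2.
  rewrite LX !(LD _ fm2) !(LZ _ fm2).
  have z1 : L mu2 (n'+k) (P n'.+1 (n'.+1+k).+1) = 0 by apply: O2; lia.
  have z2 : L mu2 (n'+k) A1 = 0 by apply: O2; lia.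
  have z3 : L mu2 (n'+k) (P n' (n' + k).+1) = 0 by apply: O2; lia.
  rewrite z1 z2 z3 !mulr0 !add0r.
  have h1 := NV2 n'.+1 (n' + k).+1.
  have h2 := NV2 n' (n' + k).
  have -> : A1 = P n'.+1 (n' + k).+1 by apply: Peq; lia.
  move=> h; apply/negP => /eqP h0; move: h h1; rewrite h0 mul0r => ->.
  by rewrite eqxx.
have q1 : P n'.+1 (n'.+1 + k).+1 = A0 - c k n'.+1 *: A1.
  by rewrite -(Hc k n'.+1) /A0 opprB addrC subrK.
have q2 : P n' (n' + k).+1 = A2 - c k n' *: A3.
  by rewrite -(Hc k n') /A2 opprB addrC subrK.
rewrite q1 q2 E1 in E2.
have G0 : (beta k.+1 N - c k n'.+1 - beta k N) *: A1 +
   ((gamma k.+1 N - gamma k N) *: A2 +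
    (delta k.+1 N - gamma k.+1 N * c k n' - delta k N) *: A3) = 0.
  move: E2; rewrite -!mul_polyC !(polyCB, polyCM) => E.
  by apply: (eq_sub0 _ _ _ _ E); ring.
have sA1 : size A1 = (n'.+1 + (n'.+1 + k)).+1 by rewrite Ps.
have sA2 : size A2 = (n'.+1 + (n' + k)).+1 by rewrite Ps.
have sA3 : size A3 = (n' + (n' + k)).+1 by rewrite Ps.
have b1 : beta k.+1 N - c k n'.+1 - beta k N = 0.
  apply: (@extract _ A1 _ 0 _ (Pm _ _) _ _ G0); last by rewrite size_poly0 sA1.
  rewrite sA1 ltnS; apply: size_lin2; rewrite ?sA2 ?sA3; lia.
rewrite b1 scale0r add0r in G0.
have b2 : gamma k.+1 N - gamma k N = 0.
  apply: (@extract _ A2 _ 0 _ (Pm _ _) _ _ G0); last by rewrite size_poly0 sA2.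
  by rewrite sA2 ltnS (leq_trans (size_scale_leq _ _)) // sA3; lia.
rewrite b2 scale0r add0r in G0.
have b3 : delta k.+1 N - gamma k.+1 N * c k n' - delta k N = 0.
  apply: (@extract _ A3 0 0 _ (Pm _ _)); rewrite ?size_poly0 ?sA3 // addr0 //.
split.
- lra.
- lra.
- have -> : gamma k N = gamma k.+1 N by lra.
  lra.
- exact: dnz.
Qed.

Lemma size_lin3 (X Y Z : {poly R}) (a b d : R) n :
  (size X <= n)%N -> (size Y <= n)%N -> (size Z <= n)%N ->
  (size (a *: X + (b *: Y + d *: Z))%R <= n)%N.
Proof.
move=> hX hY hZ; apply: leq_trans (size_add _ _) _; rewrite geq_max.
rewrite (leq_trans (size_scale_leq _ _)) //.
apply: leq_trans (size_add _ _) _; rewrite geq_max.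
by rewrite (leq_trans (size_scale_leq _ _)) // (leq_trans (size_scale_leq _ _)).
Qed.

Lemma part2 k n :
  let m := (2 * n + k)%N in
  [/\ beta k.+1 m.+1 = beta k m.+1 - c k n,
      gamma k.+1 m.+1 = gamma k m.+1 - c k n * (beta k m - beta k.+1 m.+1) &
      (delta k m.+1 - c k n * gamma k m) *: pstep P k (m%:Z - 1) +
      ((- delta k.+1 m.+1) *: pstep P k.+1 (m%:Z - 1) +
       (- (c k n * delta k m)) *: pstep P k (m%:Z - 2)) = 0].
Proof.
move=> m.
set A0 := P n.+1 (n + k); set A1 := P n (n + k); set B := P n.+1 (n.+1 + k).
set p1 := pstep P k (m%:Z - 1); set p2 := pstep P k (m%:Z - 2).
set q1 := pstep P k.+1 (m%:Z - 1).
have pA0 : pstep P k m.+1 = A0 by rewrite /A0 -ps_odd.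
have pA1 : pstep P k m = A1 by rewrite /A1 -ps_even.
have pB : pstep P k m.+2 = B.
  by rewrite /B -ps_even; congr pstep; congr Posz; rewrite /m; lia.
have E3 : 'X * A0 = B + beta k m.+1 *: A0 + gamma k m.+1 *: A1 + delta k m.+1 *: p1.
  have := Hrec k m.+1 ltac:(rewrite /m; lia).
  by rewrite zS1 zS12 pA0 pB pA1.
have E4 : 'X * A1 = A0 + beta k m *: A1 + gamma k m *: p1 + delta k m *: p2.
  have := Hrec k m ltac:(rewrite /m; lia).
  by rewrite pA1 pA0.
have E5 : 'X * P n (n + k).+1 = B + beta k.+1 m.+1 *: P n (n + k).+1
     + gamma k.+1 m.+1 *: A1 + delta k.+1 m.+1 *: q1.
  have := Hrec k.+1 m.+1 ltac:(rewrite /m; lia).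
  have r0 : pstep P k.+1 m.+1 = P n (n + k).+1.
    transitivity (P n (n + k.+1)); [rewrite -ps_even; congr pstep; congr Posz; rewrite /m; lia | apply: Peq; lia].
  have r1 : pstep P k.+1 m.+2 = B.
    transitivity (P n.+1 (n + k.+1)); [rewrite -ps_odd; congr pstep; congr Posz; rewrite /m; lia | apply: Peq; lia].
  have r2 : pstep P k.+1 m = A1 by rewrite /A1 -ps_k1.
  by rewrite zS1 zS12 r0 r1 r2.
have q : P n (n + k).+1 = A0 - c k n *: A1.
  by rewrite -(Hc k n) /A0 opprB addrC subrK.
rewrite q mulrBr -scalerAr E3 E4 in E5.
have G0 : (beta k m.+1 - c k n - beta k.+1 m.+1) *: A0 +
   ((gamma k m.+1 - c k n * beta k m + c k n * beta k.+1 m.+1 - gamma k.+1 m.+1) *: A1 +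
   ((delta k m.+1 - c k n * gamma k m) *: p1 +
      ((- delta k.+1 m.+1) *: q1 + (- (c k n * delta k m)) *: p2))) = 0.
  move: E5; rewrite -!mul_polyC !(polyCB, polyCM, polyCN, polyCD) => E.
  by apply: (eq_sub0 _ _ _ _ (esym E)); ring.
have sA0 : size A0 = (m.+1).+1 by rewrite Ps /m; lia.
have sA1 : size A1 = m.+1 by rewrite Ps /m; lia.
have sp : forall j (z : int), (z < m%:Z)%R -> (size (pstep P j z) <= m)%N.
  by move=> j z; apply: ps_size.
have sR : (size ((delta k m.+1 - c k n * gamma k m) *: p1 +
      ((- delta k.+1 m.+1) *: q1 + (- (c k n * delta k m)) *: p2))%R <= m)%N.
  apply: size_lin3; apply: sp; lia.
have b1 : beta k m.+1 - c k n - beta k.+1 m.+1 = 0.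
  apply: (@extract _ A0 _ 0 _ (Pm _ _) _ _ G0); last by rewrite size_poly0 sA0.
  rewrite sA0 ltnS; apply: leq_trans (size_add _ _) _; rewrite geq_max.
  by rewrite (leq_trans (size_scale_leq _ _)) ?sA1 // (leq_trans sR).
rewrite b1 scale0r add0r in G0.
have b2 : gamma k m.+1 - c k n * beta k m + c k n * beta k.+1 m.+1 - gamma k.+1 m.+1 = 0.
  apply: (@extract _ A1 _ 0 _ (Pm _ _) _ _ G0); last by rewrite size_poly0 sA1.
  by rewrite sA1 ltnS.
rewrite b2 scale0r add0r in G0.
split => //; first lra.
by rewrite -[LHS]addr0 -b2; ring.
Qed.
Lemma ps_low k (z : int) : (z < k%:Z - 1)%R -> pstep P k z = 0.
Proof.
case: z => [j|j] //= h.
have hj : (j.+1 < k)%N by move: h; lia.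
rewrite /pstep; case: ifP => h1; first lia.
by case: ifP => h2 //; move/eqP: h2; lia.
Qed.

Lemma part3 k n' :
  let m := (2 * n'.+1 + k)%N in
  delta k.+1 m.+1 = delta k m.+1 - c k n'.+1 * gamma k m /\
  delta k.+1 m.+1 * c k n' = c k n'.+1 * delta k m.
Proof.
move=> m.
have [_ _ G0] := part2 k n'.+1; rewrite -/m in G0.
set A2 := P n'.+1 (n' + k); set A3 := P n' (n' + k).
have eN : m = (2 * n' + k).+2 by rewrite /m; lia.
have p1 : pstep P k (m%:Z - 1) = A2.
  by rewrite eN zS1 /A2 -ps_odd.
have p2 : pstep P k (m%:Z - 2) = A3.
  by rewrite eN zS2 /A3 -ps_even.
have q1 : pstep P k.+1 (m%:Z - 1) = A2 - c k n' *: A3.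
  rewrite eN zS1 -(Hc k n') /A2 opprB addrC subrK.
  transitivity (P n' (n' + k.+1)); [rewrite -ps_even; congr pstep; congr Posz; lia | apply: Peq; lia].
rewrite p1 p2 q1 in G0.
have G1 : (delta k m.+1 - c k n'.+1 * gamma k m - delta k.+1 m.+1) *: A2 +
   (delta k.+1 m.+1 * c k n' - c k n'.+1 * delta k m) *: A3 = 0.
  move: G0; rewrite -!mul_polyC !(polyCB, polyCM, polyCN, polyCD) => E.
  by apply: (eq_sub0 _ _ _ _ (esym E)); ring.
have sA2 : size A2 = (n'.+1 + (n' + k)).+1 by rewrite Ps.
have sA3 : size A3 = (n' + (n' + k)).+1 by rewrite Ps.
have b1 : delta k m.+1 - c k n'.+1 * gamma k m - delta k.+1 m.+1 = 0.
  apply: (@extract _ A2 _ 0 _ (Pm _ _) _ _ G1); last by rewrite size_poly0 sA2.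
  by rewrite sA2 ltnS (leq_trans (size_scale_leq _ _)) // sA3; lia.
rewrite b1 scale0r add0r in G1.
have b2 : delta k.+1 m.+1 * c k n' - c k n'.+1 * delta k m = 0.
  apply: (@extract _ A3 0 0 _ (Pm _ _)); rewrite ?size_poly0 ?sA3 // addr0 //.
split; first by rewrite -[RHS]subr0 -b1; ring.
by rewrite -[LHS]subr0 -b2; ring.
Qed.

Lemma part0 k :
  beta k.+1 k = beta k k + c k 0 /\
  ((1 <= k)%N -> c k 0 = delta k k.+1 / gamma k k).
Proof.
have e0 : pstep P k k = P 0 k by have := @ps_even _ P k 0; rewrite muln0 add0n.
have e1 : pstep P k k.+1 = P 1 k by have := @ps_odd _ P k 0; rewrite muln0 add0n.
have E4 := Hrec k k (leqnn k); rewrite e0 e1 in E4.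
have hc := Hc k 0; rewrite !add0n in hc.
have sp : forall (z : int), (z < k%:Z)%R -> (size (pstep P k z) <= k)%N.
  by move=> z; apply: ps_size.
split.
  have G : (beta k k + c k 0 - beta k.+1 k) *: P 0 k +
     (gamma k k *: pstep P k (k%:Z - 1) + delta k k *: pstep P k (k%:Z - 2)) =
     'X * P 0 k - P 0 k.+1 - beta k.+1 k *: P 0 k.
    have -> : P 0 k.+1 = P 1 k - c k 0 *: P 0 k by rewrite -hc opprB addrC subrK.
    rewrite E4 -!mul_polyC !(polyCB, polyCM, polyCN, polyCD); ring.
  have h := @extract _ (P 0 k) _ _ _ (Pm _ _) _ _ G.
  have : beta k k + c k 0 - beta k.+1 k = 0.
    apply: h; rewrite Ps add0n ltnS ?(Hb k) //.
    apply: size_lin2; apply: sp; lia.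
  by move=> h0; rewrite -[LHS]addr0 -h0; ring.
case: k e0 e1 E4 hc sp => [//|k'] e0 e1 E4 hc sp _.
have [_ _ G0] := part2 k'.+1 0.
rewrite muln0 add0n in G0.
rewrite zS1 in G0 E4.
rewrite (ps_low k'.+2 k') ?(ps_low k'.+1 (k'.+1%:Z - 2)) in G0; try lia.
have p0 : pstep P k'.+1 k' = P 0 k' by rewrite /pstep ltnn eqxx.
rewrite p0 !scaler0 !addr0 in G0.
rewrite (ps_low k'.+1 (k'.+1%:Z - 2)) ?scaler0 ?addr0 in E4; last lia.
rewrite p0 in E4.
have h1 : delta k'.+1 k'.+2 - c k'.+1 0 * gamma k'.+1 k'.+1 = 0.
  by move/eqP: G0; rewrite scaler_eq0 (negbTE (@Pneq0 R mu1 mu2 P NS _ _)) orbF => /eqP.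
have hg : gamma k'.+1 k'.+1 != 0.
  have := congr1 (L mu2 k') E4.
  rewrite LX !(LD _ fm2) !(LZ _ fm2).
  have z1 : L mu2 k' (P 1 k'.+1) = 0 by apply: O2.
  have z2 : L mu2 k' (P 0 k'.+1) = 0 by apply: O2.
  rewrite z1 z2 mulr0 !add0r => h.
  apply/negP => /eqP h0; move: h; rewrite h0 mul0r => h.
  by move: (NV2 0 k'.+1); rewrite h eqxx.
rewrite (_ : delta k'.+1 k'.+2 = c k'.+1 0 * gamma k'.+1 k'.+1); last first.
  by rewrite -[LHS]subr0 -h1; ring.
by rewrite mulfK.
Qed.
Lemma mainres k :
  (forall n : nat,
        beta k.+1 (2 * n + k)%N = beta k (2 * n + k)%N + c k n) /\
  (forall n : nat, (1 <= n)%N ->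
        gamma k.+1 (2 * n + k)%N = gamma k (2 * n + k)%N) /\
  (forall n : nat, (1 <= n)%N ->
        delta k.+1 (2 * n + k)%N
          = delta k (2 * n + k)%N + c k n.-1 * gamma k (2 * n + k)%N) /\
  (forall n : nat,
        beta k.+1 (2 * n + k).+1 = beta k (2 * n + k).+1 - c k n) /\
  (forall n : nat,
        gamma k.+1 (2 * n + k).+1
          = gamma k (2 * n + k).+1
            - c k n * (beta k (2 * n + k)%N - beta k.+1 (2 * n + k).+1)) /\
  (forall n : nat, (1 <= n)%N ->
        delta k.+1 (2 * n + k).+1
          = delta k (2 * n + k).+1 - c k n * gamma k (2 * n + k)%N) /\
  (forall n : nat, (1 <= n)%N ->
        c k n = c k n.-1 * delta k (2 * n + k).+1
                / (delta k (2 * n + k)%N + c k n.-1 * gamma k (2 * n + k)%N)) /\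
  ((1 <= k)%N -> c k 0%N = delta k k.+1 / gamma k k).
Proof.
have eN : forall n', (2 * n'.+1 + k = (2 * n' + k).+2)%N by move=> n'; lia.
split.
  case=> [|n']; first by rewrite muln0 add0n; case: (part0 k).
  by rewrite eN; case: (part1 k n').
split.
  case=> [//|n'] _; by rewrite eN; case: (part1 k n').
split.
  case=> [//|n'] _; by rewrite eN; case: (part1 k n').
split.
  by move=> n; case: (part2 k n).
split.
  by move=> n; case: (part2 k n).
split.
  by case=> [//|n'] _; case: (part3 k n').
split; last by case: (part0 k).
case=> [//|n'] _ /=.
have [h1 h2] := part3 k n'.
move: h1 h2; rewrite eN => h1 h2.
have [_ _ h3 h4] := part1 k n'.
have hD : c k n' * delta k (2 * n' + k).+3 =
   c k n'.+1 * (delta k (2 * n' + k).+2 + c k n' * gamma k (2 * n' + k).+2).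
  rewrite h1 in h2; apply/eqP; rewrite -subr_eq0; apply/eqP.
  by apply: (eq_sub0 _ _ _ _ (esym h2)); ring.
rewrite hD -h3 mulfK //.
Qed.
End Main.
Theorem theorem2p2 (R : realType) (mu1 mu2 : {measure set R -> \bar R})
  (P : nat -> nat -> {poly R})
  (beta gamma delta : nat -> nat -> R) (c : nat -> nat -> R) :
  finite_moments mu1 -> finite_moments mu2 ->
  normal_system_with mu1 mu2 P ->
  (* four-term recurrence for p^{(0,k)}, n >= k; beta k n = beta_n^{(0,k)} etc. *)
  (forall k n : nat, (k <= n)%N ->
     'X * pstep P k n = pstep P k (n.+1)%:Z + beta k n *: pstep P k n
       + gamma k n *: pstep P k (n%:Z - 1) + delta k n *: pstep P k (n%:Z - 2)) ->
  (* coefficients multiplying the zero polynomial are 0 *)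
  (forall k n : nat, (k <= n)%N -> pstep P k (n%:Z - 1) = 0 -> gamma k n = 0) ->
  (forall k n : nat, (k <= n)%N -> pstep P k (n%:Z - 2) = 0 -> delta k n = 0) ->
  (* beta_k^{(0,k+1)} *)
  (forall k : nat,
     (size ('X * P 0%N k - P 0%N k.+1 - beta k.+1 k *: P 0%N k)%R <= k)%N) ->
  (* c_n^{(0,k)} *)
  (forall k n : nat,
     P n.+1 (n + k)%N - P n (n + k).+1 = c k n *: P n (n + k)%N) ->
  forall k : nat,
  (forall n : nat,
        beta k.+1 (2 * n + k)%N = beta k (2 * n + k)%N + c k n) /\
  (forall n : nat, (1 <= n)%N ->
        gamma k.+1 (2 * n + k)%N = gamma k (2 * n + k)%N) /\
  (forall n : nat, (1 <= n)%N ->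
        delta k.+1 (2 * n + k)%N
          = delta k (2 * n + k)%N + c k n.-1 * gamma k (2 * n + k)%N) /\
  (forall n : nat,
        beta k.+1 (2 * n + k).+1 = beta k (2 * n + k).+1 - c k n) /\
  (forall n : nat,
        gamma k.+1 (2 * n + k).+1
          = gamma k (2 * n + k).+1
            - c k n * (beta k (2 * n + k)%N - beta k.+1 (2 * n + k).+1)) /\
  (forall n : nat, (1 <= n)%N ->
        delta k.+1 (2 * n + k).+1
          = delta k (2 * n + k).+1 - c k n * gamma k (2 * n + k)%N) /\
  (forall n : nat, (1 <= n)%N ->
        c k n = c k n.-1 * delta k (2 * n + k).+1
                / (delta k (2 * n + k)%N + c k n.-1 * gamma k (2 * n + k)%N)) /\
  ((1 <= k)%N -> c k 0%N = delta k k.+1 / gamma k k).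
Proof.
move=> fm1 fm2 NS Hrec _ _ Hb Hc k.
exact: (@mainres R mu1 mu2 P beta gamma delta c fm1 fm2 NS Hrec Hb Hc k).
Qed.
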